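(* Let $x,y\in(0,\infty)$ and $n,m\in\mathbb{N}$ be such that $\frac{x}{1+y}\le1$. Then: (i) $\displaystyle\prod_{i=m}^n\Big(1-\frac{x}{i+y}\Big)\le\Big(\frac{n+1+y}{m+y}\Big)^{-x}$; (ii) $\displaystyle\sum_{i=1}^n\frac{1}{(i+y)^2}\prod_{j=i+1}^n\Big(1-\frac{x}{j+y}\Big)\le\exp\Big(\frac{x}{1+y}\Big)\cdot\begin{cases}(n+1+y)^{-1}\frac{1}{x-1}, & x\in(1,\infty),\\ (n+1+y)^{-1}\big(1+\ln(n+y)\big), & x=1,\\ (n+1+y)^{-x}\frac{(1+y)^{x-2}(x-2-y)}{x-1}, & x\in[0,1).\end{cases}$
   Context: Empty products are equal to $1$. *)

(* Defs.v *)
From mathcomp Require Import all_boot all_order all_algebra.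
From mathcomp Require Import all_classical all_reals all_analysis.

(* Main.v *)
Require Import Defs.
From mathcomp Require Import all_boot all_order all_algebra.
From mathcomp Require Import all_classical all_reals all_analysis.
Import Order.TTheory GRing.Theory Num.Theory.
From mathcomp Require Import ring lra.
Local Open Scope ring_scope.

Section SA.
Variable R : realType.
Implicit Types r b : R.

Lemma pow1 (q : R) : 1 `^ q = 1.
Proof. by rewrite powR1. Qed.

Lemma bern_lo r b : 0 < r -> 0 < b -> b < 1 -> r `^ b <= 1 + b * (r - 1).
Proof.
move=> r0 b0 b1.
have c0 : 0 < 1 - b by lra.
have := @conjugate_powR R (r `^ b) 1 b^-1 (1 - b)^-1 (powR_ge0 _ _) ler01
  ltac:(by rewrite invr_gt0) ltac:(by rewrite invr_gt0).
rewrite !invrK -powRrM mulfV ?(lt0r_neq0 b0) // (powRr1 (ltW r0)) pow1 mulr1 ?invrK.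
move=> H; have := H ltac:(ring).
lra.
Qed.

Lemma bern_hi r b : 0 < r -> 1 <= b -> 1 + b * (r - 1) <= r `^ b.
Proof.
move=> r0; rewrite le_eqVlt => /predU1P[<-|b1].
  by rewrite (powRr1 (ltW r0)); lra.
have b0 : 0 < b by lra.
have bi : b^-1 < 1 by rewrite invf_lt1.
have c0 : 0 < 1 - b^-1 by lra.
have := @conjugate_powR R r 1 b (1 - b^-1)^-1 (ltW r0) ler01 b0 ltac:(by rewrite invr_gt0).
rewrite ?invrK pow1 mulr1 ?invrK.
move=> H; have := H ltac:(ring).
move=> {}H.
have : b * r <= b * (r `^ b / b + 1 * (1 - b^-1)) by rewrite ler_pM2l.
have -> : b * (r `^ b / b + 1 * (1 - b^-1)) = r `^ b + b - 1.
  by field; apply/lt0r_neq0; lra.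
lra.
Qed.

Lemma bern_neg r b : 0 < r -> b < 0 -> 1 + b * (r - 1) <= r `^ b.
Proof.
move=> r0 b0.
have c0 : 0 < 1 - b by lra.
set c := 1 - b.
set t := - b / c.
have t0 : 0 < t by rewrite /t divr_gt0 // oppr_gt0.
have := @conjugate_powR R (r `^ t) (r `^ (b / c)) t^-1 c (powR_ge0 _ _)
  (powR_ge0 _ _) ltac:(by rewrite invr_gt0) c0.
rewrite invrK -powRD; last by rewrite (lt0r_neq0 r0) implybT.
rewrite -!powRrM mulfV ?(lt0r_neq0 t0) // divfK ?(lt0r_neq0 c0) // (powRr1 (ltW r0)).
have -> : t + b / c = 0 by rewrite /t /c; field; apply/lt0r_neq0; lra.
rewrite powRr0 ?invrK => H.
have {}H := H ltac:(by rewrite /t /c; field; apply/lt0r_neq0; lra).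
have : c * 1 <= c * (r * t + r `^ b / c) by rewrite ler_pM2l.
have -> : c * (r * t + r `^ b / c) = - b * r + r `^ b.
  by rewrite /t /c; field; apply/lt0r_neq0; lra.
rewrite /c; lra.
Qed.

Lemma tele (f g : nat -> R) n :
  (forall i, (1 <= i <= n)%N -> f i <= g i - g i.-1) ->
  \sum_(1 <= i < n.+1) f i <= g n - g 0%N.
Proof.
elim: n => [|n IH] H; first by rewrite big_geq // subrr.
rewrite big_nat_recr //=.
have h1 := IH (fun i hi => H i ltac:(case/andP: hi => a b; rewrite a /=; exact: leqW)).
have h2 := H n.+1 ltac:(by rewrite leqnn).
rewrite /= in h2; lra.
Qed.

Lemma factor_le (x y : R) (i : nat) : 0 < x -> 0 < y -> x <= i%:R + y ->
  0 <= 1 - x / (i%:R + y) <= ((i.+1%:R + y) / (i%:R + y)) `^ (- x).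
Proof.
move=> x0 y0 xi.
have u0 : 0 < i%:R + y by rewrite ltr_wpDl.
apply/andP; split.
  by rewrite subr_ge0 ler_pdivrMr // mul1r.
have r0 : 0 < (i.+1%:R + y) / (i%:R + y) by rewrite divr_gt0 // ltr_wpDl.
rewrite /powR gt_eqF //.
apply: (le_trans _ (expR_ge1Dx _)).
rewrite lerD2l mulNr lerN2 -natr1.
have -> : (i%:R + 1 + y) / (i%:R + y) = 1 + (i%:R + y)^-1.
  by field; rewrite gt_eqF.
rewrite ler_pM2l //; apply: le_ln1Dx.
by apply: (lt_le_trans (y:=0)); rewrite ?ltrN10 ?invr_ge0 ?ltW.
Qed.

Lemma prod_tel (x y : R) m k : 0 < y -> (m <= k)%N ->
  \prod_(m <= i < k) ((i.+1%:R + y) / (i%:R + y)) `^ (- x)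
  = ((k%:R + y) / (m%:R + y)) `^ (- x).
Proof.
move=> y0; elim: k => [|k IH].
  by rewrite leqn0 => /eqP ->; rewrite big_geq // divff ?pow1 // gt_eqF // ltr_wpDl.
rewrite leq_eqVlt => /orP[/eqP ->|]; first by rewrite big_geq // divff ?pow1 // gt_eqF // ltr_wpDl.
rewrite ltnS => mk.
rewrite big_nat_recr //= IH // -powRM ?divr_ge0 ?addr_ge0 ?(ltW y0) //.
congr (_ `^ _); rewrite -!natr1.
have mk0 : 0 < m%:R + y by rewrite ltr_wpDl.
have kk0 : 0 < k%:R + y by rewrite ltr_wpDl.
by field; rewrite !gt_eqF.
Qed.

End SA.

Section SB.
Variable R : realType.
Implicit Types r b : R.
Lemma ler_prod_nat m k (E1 E2 : nat -> R) :
  (forall i, (m <= i)%N -> (i < k)%N -> 0 <= E1 i <= E2 i) ->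
  \prod_(m <= i < k) E1 i <= \prod_(m <= i < k) E2 i.
Proof.
move=> H; rewrite big_nat_cond.
rewrite [X in _ <= X]big_nat_cond.
apply: ler_prod => i /andP[/andP[a b] _]; exact: H.
Qed.

Lemma part1 (x y : R) (n m : nat) : 0 < x -> 0 < y -> (1 <= m)%N ->
  x / (1 + y) <= 1 ->
  \prod_(m <= i < n.+1) (1 - x / (i%:R + y))
     <= ((n.+1%:R + y) / (m%:R + y)) `^ (- x).
Proof.
move=> x0 y0 m1 hxy.

have h1 : 0 < 1 + y by rewrite addr_gt0.

have x1 : x <= 1 + y by move: hxy; rewrite ler_pdivrMr // mul1r.

case: (leqP m n.+1) => mn.

  rewrite -prod_tel //; apply: ler_prod_nat => i mi _.
  apply: factor_le => //; apply: (le_trans x1); rewrite lerD2r ler1n.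
  exact: leq_trans mi.
rewrite big_geq ?(ltnW mn) //. 
rewrite -[X in X <= _](powRr0 ((n.+1%:R + y) / (m%:R + y))).
apply: ger_powR; last by rewrite oppr_le0 (ltW x0).
apply/andP; split; first by rewrite divr_gt0 // ltr_wpDl.
have h0 : 0 < m%:R + y by rewrite ltr_wpDl.
rewrite ler_pdivrMr // mul1r lerD2r ler_nat; exact: ltnW.
Qed.
End SB.

Section SC.
Variable R : realType.

Lemma term_le (x y : R) n i : 0 < x -> 0 < y -> x / (1 + y) <= 1 ->
  (1 <= i)%N ->
  ((i%:R + y) ^+ 2)^-1 * \prod_(i.+1 <= j < n.+1) (1 - x / (j%:R + y))
  <= expR (x / (1 + y)) * ((n.+1%:R + y) `^ (- x) * (i%:R + y) `^ (x - 2)).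
Proof.
move=> x0 y0 hxy i1.
have u0 : 0 < i%:R + y by rewrite ltr_wpDl.
have v0 : 0 < i.+1%:R + y by rewrite ltr_wpDl.
have N0 : 0 < n.+1%:R + y by rewrite ltr_wpDl.
have y1 : 0 < 1 + y by rewrite addr_gt0.
apply: le_trans.
  apply: ler_wpM2l; first by rewrite invr_ge0 exprn_ge0 // ltW.
  exact: part1.
have eu : ((i%:R + y) ^+ 2)^-1 = expR (- (2 * ln (i%:R + y))).
  by rewrite expRN expRM_natl lnK.
rewrite eu /powR !gt_eqF ?divr_gt0 // -!expRD ler_expR ln_div ?posrE //.
have h1 : ln (i.+1%:R + y) - ln (i%:R + y) <= (1 + y)^-1.
  rewrite -ln_div ?posrE // -natr1.
  have -> : (i%:R + 1 + y) / (i%:R + y) = 1 + (i%:R + y)^-1.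
    by field; rewrite gt_eqF.
  apply: le_trans; first apply: le_ln1Dx.
    by apply: (lt_le_trans (y:=0)); rewrite ?ltrN10 ?invr_ge0 ?(ltW u0).
  rewrite lef_pV2 ?posrE // lerD2r ler1n //.
have h2 := ler_wpM2l (ltW x0) h1.
rewrite mulrBr in h2.
lra.
Qed.
End SC.

Section SD.
Variable R : realType.

Lemma tang_eq (u v b : R) : 0 < u ->
  u `^ b * (1 + b * (v / u - 1)) = u `^ b + b * (v - u) * u `^ (b - 1).
Proof.
move=> u0; rewrite powRB; last by rewrite (lt0r_neq0 u0) implybT.
rewrite (powRr1 (ltW u0)); field; exact: lt0r_neq0.
Qed.

Lemma split_pow (u v b : R) : 0 < u -> 0 < v -> v `^ b = u `^ b * (v / u) `^ b.
Proof.
move=> u0 v0; rewrite -powRM ?(ltW u0) ?divr_ge0 ?(ltW u0) ?(ltW v0) //.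
congr (_ `^ _); field; exact: lt0r_neq0.
Qed.

Lemma tang_ge (u v b : R) : 0 < u -> 0 < v -> (1 <= b) || (b < 0) ->
  u `^ b + b * (v - u) * u `^ (b - 1) <= v `^ b.
Proof.
move=> u0 v0 hb; rewrite -tang_eq // (@split_pow u v b u0 v0).
apply: ler_wpM2l; first exact: powR_ge0.
have r0 : 0 < v / u by rewrite divr_gt0.
by case/orP: hb => hb; [apply: bern_hi | apply: bern_neg].
Qed.

Lemma tang_le (u v b : R) : 0 < u -> 0 < v -> 0 < b -> b < 1 ->
  v `^ b <= u `^ b + b * (v - u) * u `^ (b - 1).
Proof.
move=> u0 v0 b0 b1; rewrite -tang_eq // (@split_pow u v b u0 v0).
apply: ler_wpM2l; first exact: powR_ge0.
have r0 : 0 < v / u by rewrite divr_gt0.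
exact: bern_lo.
Qed.
End SD.

Section SE.
Variable R : realType.

Lemma S_ge2 (x y : R) n : 2 <= x -> 0 < y ->
  \sum_(1 <= i < n.+1) (i%:R + y) `^ (x - 2) <= (n.+1%:R + y) `^ (x - 1) / (x - 1).
Proof.
move=> x2 y0.
have b0 : 0 < x - 1 by lra.
apply: le_trans.
  apply: (@tele R _ (fun i : nat => (i.+1%:R + y) `^ (x - 1) / (x - 1))).

  move=> i /andP[i1 _]; rewrite prednK // -mulrBl ler_pdivlMr //.
  have u0 : 0 < i%:R + y by rewrite ltr_wpDl.
  have v0 : 0 < i.+1%:R + y by rewrite ltr_wpDl.
  have := @tang_ge R (i%:R + y) (i.+1%:R + y) (x - 1) u0 v0 ltac:(apply/orP; left; lra).
  have -> : x - 1 - 1 = x - 2 by ring.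
  have -> : i.+1%:R + y - (i%:R + y) = 1 by rewrite -natr1; ring.
  lra.
have : 0 <= (0%N.+1%:R + y) `^ (x - 1) / (x - 1) by rewrite divr_ge0 ?powR_ge0 ?(ltW b0).
lra.
Qed.

Lemma S_12 (x y : R) n : 1 < x -> x < 2 -> 0 < y ->
  \sum_(1 <= i < n.+1) (i%:R + y) `^ (x - 2) <= (n.+1%:R + y) `^ (x - 1) / (x - 1).
Proof.
move=> x1 x2 y0.
have b0 : 0 < x - 1 by lra.
apply: le_trans.
  apply: (@tele R _ (fun i : nat => (i%:R + y) `^ (x - 1) / (x - 1))).

  case=> [//|j] /andP[_ _] /=; rewrite -mulrBl ler_pdivlMr //.
  have u0 : 0 < j.+1%:R + y by rewrite ltr_wpDl.
  have v0 : 0 < j%:R + y by rewrite ltr_wpDl.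
  have := @tang_le R (j.+1%:R + y) (j%:R + y) (x - 1) u0 v0 b0 ltac:(lra).
  have -> : x - 1 - 1 = x - 2 by ring.
  have -> : j%:R + y - (j.+1%:R + y) = -1 by rewrite -natr1; ring.
  lra.
have h1 : 0 <= (0%:R + y) `^ (x - 1) / (x - 1) by rewrite divr_ge0 ?powR_ge0 ?(ltW b0).
have h2 : (n%:R + y) `^ (x - 1) / (x - 1) <= (n.+1%:R + y) `^ (x - 1) / (x - 1).
  rewrite ler_pM2r ?invr_gt0 //; apply: ge0_ler_powR; rewrite ?nnegrE ?(ltW b0) //.
  - by rewrite addr_ge0 ?(ltW y0).
  - by rewrite addr_ge0 ?(ltW y0).
  - by rewrite lerD2r ler_nat.
lra.
Qed.

Lemma S_1 (y : R) n : 0 < y -> (1 <= n)%N ->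
  \sum_(1 <= i < n.+1) (i%:R + y) `^ (1 - 2) <= 1 + ln (n%:R + y).
Proof.
move=> y0 n1.
have -> : (1 - 2 : R) = -1 by ring.
apply: le_trans.
  apply: (@tele R _ (fun i : nat => if i is 0%N then 0 else 1 + ln (i%:R + y))).
  case=> [//|j] /andP[_ _] /=.
  have u0 : 0 < j.+1%:R + y by rewrite ltr_wpDl.
  rewrite powR_inv1 ?(ltW u0) //.
  case: j u0 => [|k] u0.
    have : 0 <= ln (1%:R + y) by apply: ln_ge0; rewrite ler_wpDr // ltW.
    have : (1%:R + y)^-1 <= 1 by rewrite invf_le1 // ler_wpDr // ltW.
    lra.
  have w0 : 0 < k.+1%:R + y by rewrite ltr_wpDl.
  have : ln (k.+1%:R + y) - ln (k.+2%:R + y) <= - (k.+2%:R + y)^-1.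
    rewrite -ln_div ?posrE //.
    have -> : (k.+1%:R + y) / (k.+2%:R + y) = 1 + - (k.+2%:R + y)^-1.
      have hk : (0:R) <= k%:R by exact: ler0n.
      rewrite -!natr1; field; apply: lt0r_neq0; lra.
    have hk : (0:R) <= k%:R by exact: ler0n.
    apply: le_ln1Dx; rewrite ltrN2 invf_lt1 // -!natr1; lra.
  lra.
case: n n1 => [//|n] _ /=.
lra.
Qed.

Lemma S_lt1 (x y : R) n : 0 < x -> x < 1 -> 0 < y ->
  \sum_(1 <= i < n.+1) (i%:R + y) `^ (x - 2)
  <= (1 + y) `^ (x - 2) + (1 + y) `^ (x - 1) / (1 - x).
Proof.
move=> x0 x1 y0.
have b0 : 0 < 1 - x by lra.
apply: le_trans.
  apply: (@tele R _ (fun i : nat => if i is 0%N then 0 else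
     (1 + y) `^ (x - 2) + ((1 + y) `^ (x - 1) - (i%:R + y) `^ (x - 1)) / (1 - x))).
  case=> [//|j] /andP[_ _] /=.
  case: j => [|k].
    by rewrite subrr mul0r addr0 subr0 ?mulr1n.
  have u0 : 0 < k.+2%:R + y by rewrite ltr_wpDl.
  have v0 : 0 < k.+1%:R + y by rewrite ltr_wpDl.
  have := @tang_ge R (k.+2%:R + y) (k.+1%:R + y) (x - 1) u0 v0 ltac:(apply/orP; right; lra).
  have -> : x - 1 - 1 = x - 2 by ring.
  have -> : k.+1%:R + y - (k.+2%:R + y) = -1 by rewrite -[k.+2%:R]natr1; ring.
  move=> h.
  have -> : (1 + y) `^ (x - 2) + ((1 + y) `^ (x - 1) - (k.+2%:R + y) `^ (x - 1)) / (1 - x) -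
    ((1 + y) `^ (x - 2) + ((1 + y) `^ (x - 1) - (k.+1%:R + y) `^ (x - 1)) / (1 - x))
    = ((k.+1%:R + y) `^ (x - 1) - (k.+2%:R + y) `^ (x - 1)) / (1 - x).
    by field; exact: lt0r_neq0.
  rewrite ler_pdivlMr //. lra.
case: n => [|n] /=.
  rewrite subr0; apply: addr_ge0; first exact: powR_ge0.
  by apply: divr_ge0; rewrite ?powR_ge0 ?(ltW b0).
rewrite subr0 lerD2l ler_pM2r ?invr_gt0 // gerBl; exact: powR_ge0.
Qed.
End SE.

Theorem lemmaA1 (R : realType) (x y : R) (n m : nat)
  (hx : 0 < x) (hy : 0 < y) (hm : (1 <= m)%N) (hn : (1 <= n)%N)
  (hxy : x / (1 + y) <= 1) :
  (\prod_(m <= i < n.+1) (1 - x / (i%:R + y))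
     <= ((n.+1%:R + y) / (m%:R + y)) `^ (- x))
  /\
  (\sum_(1 <= i < n.+1)
      ((i%:R + y) ^+ 2)^-1 * \prod_(i.+1 <= j < n.+1) (1 - x / (j%:R + y))
     <= expR (x / (1 + y)) *
        (if 1 < x then (n.+1%:R + y)^-1 * (x - 1)^-1
         else if x == 1 then (n.+1%:R + y)^-1 * (1 + ln (n%:R + y))
         else (n.+1%:R + y) `^ (- x) *
              ((1 + y) `^ (x - 2) * (x - 2 - y) / (x - 1)))).
Proof.
split; first exact: part1.
have N0 : 0 < n.+1%:R + y by rewrite ltr_wpDl.
apply: le_trans.
  apply: ler_sum_nat => i /andP[i1 _]; exact: term_le.
rewrite -big_distrr -big_distrr /=.
apply: ler_wpM2l; first exact: expR_ge0.
case: (ltrP 1 x) => x1.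
  have hS : \sum_(1 <= i < n.+1) (i%:R + y) `^ (x - 2)
      <= (n.+1%:R + y) `^ (x - 1) / (x - 1).
    by case: (lerP 2 x) => x2; [apply: S_ge2 | apply: S_12].
  apply: le_trans (ler_wpM2l (powR_ge0 _ _) hS) _.
  rewrite mulrA -powRD; last by rewrite (lt0r_neq0 N0) implybT.
  have -> : - x + (x - 1) = -1 by ring.
  by rewrite powR_inv1 ?(ltW N0).
case: (eqVneq x 1) => [ex|xn1].
  subst x; rewrite powR_inv1 ?(ltW N0) //.
  apply: ler_wpM2l; first by rewrite invr_ge0 (ltW N0).
  exact: S_1.
apply: ler_wpM2l; first exact: powR_ge0.
have xl1 : x < 1 by rewrite lt_neqAle xn1 x1.
apply: le_trans; first exact: S_lt1.
have y1 : 0 < 1 + y by rewrite addr_gt0.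
have -> : (1 + y) `^ (x - 1) = (1 + y) `^ (x - 2) * (1 + y).
  have -> : x - 1 = (x - 2) + 1 by ring.
  rewrite powRD; last by rewrite (lt0r_neq0 y1) implybT.
  by rewrite (powRr1 (ltW y1)).
rewrite le_eqVlt; apply/orP; left; apply/eqP; field.
have h1 : (1 - x) != 0 by apply: lt0r_neq0; lra.
have h2 : (x - 1) != 0 by rewrite -oppr_eq0 opprB.
by rewrite h1 h2.
Qed.
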